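(* Let $t>0$. There exists a sequence $(t_n)$ with $t_n\to t$ such that for all $u,v\in\mathcal D$: if $(q_n^{(u,v)})$ converges in $(\mathcal D,d)$, then $\lim_n \Delta q_n^{(u,v)}(t_n)=\Delta\big(\lim_n q_n^{(u,v)}\big)(t)$.
   Context: Let $\pi=(\pi_n)_{n\ge1}$ be a sequence of partitions $\pi_n=(t^n_0,\dots,t^n_{k_n})$ with $0=t^n_0<\dots<t^n_{k_n}<\infty$, $t^n_{k_n}\uparrow\infty$, and mesh tending to $0$ on compacts; sums over $i$ run over $0\le i<k_n$. $\mathcal D$ is the space of càdlàg functions $[0,\infty)\to\mathbb R$ with a metric $d$ inducing the Skorokhod $J_1$ topology. For $f\in\mathcal D$, $\Delta f(s)=f(s)-f(s-)$. For $u,v\in\mathcal D$: $q_n^{(u,v)}(s)=\sum_{i:\,t^n_i\le s}(u(t^n_{i+1})-u(t^n_i))(v(t^n_{i+1})-v(t^n_i))$. *)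

(* Defs.v *)
From HB Require Import structures.
From mathcomp Require Import all_boot all_order all_algebra.
From mathcomp Require Import all_classical all_reals all_analysis.
Set Implicit Arguments. Unset Strict Implicit. Unset Printing Implicit Defensive.
Import Order.TTheory GRing.Theory Num.Theory.
Import numFieldNormedType.Exports.
Local Open Scope classical_set_scope.
Local Open Scope ring_scope.

(* A sequence of partitions: pi_n = (p n 0, ..., p n (k n)). *)
Definition partition_seq (R : realType) (k : nat -> nat) (p : nat -> nat -> R) : Prop :=
  [/\ (forall n, p n 0%N = 0),
      (forall n i, (i < k n)%N -> p n i < p n i.+1),
      (forall n, p n (k n) <= p n.+1 (k n.+1)),
      ((fun n => p n (k n)) @ \oo --> +oo) &
      (* mesh tends to 0 on compacts *)
      (forall T eps : R, 0 < eps -> \forall n \near \oo,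
          forall i, (i < k n)%N -> p n i <= T -> p n i.+1 - p n i <= eps)].

Definition cadlag (R : realType) (f : R -> R) : Prop :=
  (forall s, 0 <= s -> f x @[x --> s^'+] --> f s) /\
  (forall s, 0 < s -> cvg (f x @[x --> s^'-])).

(* left limit and jump; convention f(0-) = f(0), so the jump at s <= 0 is 0 *)
Definition leftlim (R : realType) (f : R -> R) (s : R) : R := lim (f x @[x --> s^'-]).
Definition jump (R : realType) (f : R -> R) (s : R) : R :=
  if 0 < s then f s - leftlim f s else 0.

Definition timechange (R : realType) (lam : R -> R) : Prop :=
  [/\ lam 0 = 0,
      (forall s r, 0 <= s -> s < r -> lam s < lam r),
      {within `[0, +oo[, continuous lam} &
      (forall M, exists s, 0 <= s /\ M <= lam s)].

(* Convergence in the Skorokhod J1 topology on D[0,oo)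
   (Jacod-Shiryaev VI.1.14 characterization). *)
Definition J1cvg (R : realType) (f : nat -> R -> R) (g : R -> R) : Prop :=
  exists lam : nat -> R -> R,
    [/\ (forall n, timechange (lam n)),
        (forall eps : R, 0 < eps -> \forall n \near \oo,
            forall s, 0 <= s -> `|lam n s - s| <= eps) &
        (forall (N : nat) (eps : R), 0 < eps -> \forall n \near \oo,
            forall s, 0 <= s -> s <= N%:R -> `|f n (lam n s) - g s| <= eps)].

Definition qn (R : realType) (k : nat -> nat) (p : nat -> nat -> R)
    (u v : R -> R) (n : nat) (s : R) : R :=
  \sum_(0 <= i < k n | p n i <= s)
     (u (p n i.+1) - u (p n i)) * (v (p n i.+1) - v (p n i)).

(* Main.v *)
Require Import Defs.
From HB Require Import structures.
From mathcomp Require Import all_boot all_order all_algebra.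
From mathcomp Require Import all_classical all_reals all_analysis.
From mathcomp Require Import ring lra.
Import Order.TTheory GRing.Theory Num.Theory.
Import numFieldNormedType.Exports.
Local Open Scope classical_set_scope.
Local Open Scope ring_scope.
Set Implicit Arguments. Unset Strict Implicit.
Section Aux.
Variable R : realType.

Lemma pmono (k : nat -> nat) (p : nat -> nat -> R) : partition_seq k p ->
  forall n j m, (j < m)%N -> (m <= k n)%N -> p n j < p n m.
Proof.
case=> _ hinc _ _ _ n j m; elim: m => // m IH.
rewrite ltnS leq_eqVlt => /orP[/eqP-> hm|hjm hm].
  by apply: hinc.
apply: lt_trans (IH hjm (ltnW hm)) _; exact: hinc.
Qed.

Lemma fin_below (f : nat -> R) (x : R) : forall m : nat, exists y, y < x /\
  forall j, (j < m)%N -> f j < x -> f j <= y.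
Proof.
elim=> [|m [y [yx hy]]].
  by exists (x - 1); split => // ; rewrite ltrBlDr ltrDl.
case: (ltP (f m) x) => hm.
  exists (Num.max y (f m)); split; first by rewrite gt_max yx hm.
  move=> j; rewrite ltnS leq_eqVlt => /orP[/eqP->|hj] hfj.
    by rewrite le_max lexx orbT.
  by rewrite le_max hy.
exists y; split => // j; rewrite ltnS leq_eqVlt => /orP[/eqP->|hj] hfj.
  by move: (lt_le_trans hfj hm); rewrite ltxx.
exact: hy.
Qed.

Definition term (p : nat -> nat -> R) (u v : R -> R) n j :=
  (u (p n j.+1) - u (p n j)) * (v (p n j.+1) - v (p n j)).

Definition Dn (k : nat -> nat) (p : nat -> nat -> R) (u v : R -> R) n x :=
  \sum_(0 <= j < k n | p n j == x) term p u v n j.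

Lemma qn_diff k p u v n x y z :
  (forall j, (j < k n)%N -> p n j < x -> p n j <= y) -> y < z -> z < x ->
  qn k p u v n x - qn k p u v n z = Dn k p u v n x.
Proof.
move=> hy yz zx; apply/eqP; rewrite subr_eq /qn /Dn.
rewrite [X in _ == X + _]big_mkcond [X in _ == _ + X]big_mkcond /=.
rewrite big_mkcond -big_split /=; apply/eqP; rewrite big_nat_cond [RHS]big_nat_cond.
apply: eq_bigr => j /andP[/andP[_ hj] _]; rewrite /term.
case: (eqVneq (p n j) x) => [->|hne].
  have -> : (x <= z) = false by apply/negbTE; rewrite -ltNge.
  by rewrite lexx addr0.
case: (leP (p n j) x) => hjx.
  have hlt : p n j < x by rewrite lt_neqAle hne hjx.
  by rewrite (le_trans (hy j hj hlt) (ltW yz)) add0r.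
have -> : (p n j <= z) = false by apply/negbTE; rewrite -ltNge (lt_trans zx hjx).
by rewrite add0r.
Qed.
End Aux.
Section Aux2.
Variable R : realType.
Variables (k : nat -> nat) (p : nat -> nat -> R).

Lemma jump_qn u v n x : 0 < x -> jump (qn k p u v n) x = Dn k p u v n x.
Proof.
move=> x0; have [y [yx hy]] := fin_below (p n) x (k n).
rewrite /jump x0 /leftlim.
have -> : lim (qn k p u v n z @[z --> x^'-]) = qn k p u v n x - Dn k p u v n x.
  apply: (lim_near_cst (@norm_hausdorff R R^o)).
  near=> z.
have yz : y < z by near: z; exact: nbhs_left_gt.
have zx : z < x by near: z; exact: nbhs_left_lt.
  by rewrite -(@qn_diff R k p u v n x y z hy yz zx) opprB addrC subrK.
by rewrite opprB addrC subrK.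
Unshelve. all: end_near.
Qed.

Lemma Dn_cases (hp : partition_seq k p) u v n x :
  (exists2 j, (j < k n)%N & p n j = x /\ Dn k p u v n x = term p u v n j)
  \/ Dn k p u v n x = 0.
Proof.
case: (pselect (exists2 j, (j < k n)%N & p n j = x)) => [[j hj hjx]|hno].
  left; exists j => //; split => //.
  rewrite /Dn big_mkord (bigD1 (Ordinal hj)) /=; last by rewrite hjx.
  rewrite big1 ?addr0 // => i /andP[/eqP hix hij]; exfalso.
  have hne : (nat_of_ord i != j) by apply: contra hij => /eqP h; apply/eqP/val_inj.
  case: (ltngtP i j) hne => // hlt _.
    by have := @pmono R k p hp n i j hlt (ltnW hj); rewrite hix hjx ltxx.
  by have := @pmono R k p hp n j i hlt (ltnW (ltn_ord i)); rewrite hix hjx ltxx.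
right; rewrite /Dn big_nat_cond big1 // => j /andP[/andP[_ hj] /eqP hjx].
by exfalso; apply: hno; exists j.
Qed.
End Aux2.
Section Aux3.
Variable R : realType.

Lemma near_delta (t : R) (P : R -> Prop) :
  (\forall x \near t, P x) -> exists2 d, 0 < d & forall x, `|t - x| < d -> P x.
Proof.
move=> /nbhs_ballP [d d0 hd]; exists d => // x hx; apply: hd.
Qed.

Lemma cadlag_win (f : R -> R) t e : cadlag f -> 0 < t -> 0 < e ->
  exists2 d, 0 < d & (forall x, t <= x -> x < t + d -> `|f x - f t| <= e) /\
    (forall x, t - d < x -> x < t -> `|f x - leftlim f t| <= e).
Proof.
case=> hr hl t0 e0.
have := hr t (ltW t0); move/cvgrPdist_le => /(_ e e0).
rewrite near_withinE => /near_delta [d1 d10 h1].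
have := hl t t0; move/cvgrPdist_le => /(_ e e0).
rewrite near_withinE => /near_delta [d2 d20 h2].
exists (Num.min d1 d2); first by rewrite lt_min d10 d20.
split=> x.
  rewrite le_eqVlt => /orP[/eqP<-|tx] xd; first by rewrite subrr normr0 ltW.
  rewrite distrC; apply: h1 => //; rewrite distrC gtr0_norm ?subr_gt0 //.
  by rewrite ltrBlDl; apply: (lt_le_trans xd); rewrite lerD2l ge_min lexx.
move=> tx xt; rewrite distrC; apply: h2 => //.
rewrite gtr0_norm ?subr_gt0 // ltrBlDl -ltrBlDr.
by apply: le_lt_trans tx; rewrite lerD2l lerN2 ge_min lexx orbT.
Qed.
End Aux3.
Section Aux4.
Variable R : realType.

Lemma norm3 (a b c d : R) e1 e2 e3 : `|a - b| <= e1 -> `|b - c| <= e2 -> `|c - d| <= e3 ->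
  `|a - d| <= e1 + e2 + e3.
Proof.
move=> h1 h2 h3.
have -> : a - d = (a - b) + (b - c) + (c - d) by ring.
apply: le_trans (ler_normD _ _) _; apply: lerD => //.
by apply: le_trans (ler_normD _ _) _; apply: lerD.
Qed.

Lemma jump_le (f : R -> R) s lo c e : 0 < e -> cadlag f -> 0 < s -> lo < s ->
  (forall r, lo < r -> r <= s -> `|f r - c| <= e) -> `|jump f s| <= e + e + e.
Proof.
move=> e0; case=> _ hl s0 los hf; rewrite /jump s0.
have hL := hl s s0; move/cvgrPdist_le: hL => hL.
have [r hr] : exists r, [/\ lo < r, r < s & `|leftlim f s - f r| <= e].
  apply: (@filter_ex R (s^'-) _); near=> r; split.
  - by near: r; exact: nbhs_left_gt.
  - by near: r; exact: nbhs_left_lt.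
  - by near: r; exact: (hL e e0).
case: hr => h1 h2 h3.
apply: (@norm3 _ c (f r)).
- exact: hf.
- by rewrite distrC; apply: hf => //; exact: ltW.
- by rewrite distrC.
Unshelve. all: end_near.
Qed.
End Aux4.
Section Aux5.
Variable R : realType.

Lemma core (k : nat -> nat) (p : nat -> nat -> R) (u v q lam : R -> R) n (N e s : R) :
  0 < e -> cadlag q -> timechange lam -> 0 < s -> s <= N ->
  (forall r, 0 <= r -> r <= N -> `|qn k p u v n (lam r) - q r| <= e) ->
  `|jump q s - Dn k p u v n (lam s)| <= e + e + e.
Proof.
move=> e0 [_ hl] [l0 lmono lcont _] s0 sN hu.
have x0 : 0 < lam s by rewrite -l0; apply: lmono.
have [y [yx hy]] := fin_below (p n) (lam s) (k n).
have hL := hl s s0; move/cvgrPdist_le: hL => hL.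
have lc : lam x @[x --> within `[0, +oo[%classic (nbhs s)] --> lam s.
  move/subspace_continuousP: lcont => lcont; apply: lcont.
  by rewrite /= in_itv /= andbT ltW.
have hy' := cvgr_gt _ lc y yx.
have hy2 : \forall r \near s^'-, 0 <= r -> y < lam r.
  rewrite near_withinE; move: hy'; rewrite near_withinE => hy'.
  near=> r => _ r0.
  have : `[0, +oo[%classic r -> y < lam r by near: r; exact: hy'.
  by apply; rewrite /= in_itv /= andbT.
have [r hr] : exists r, [/\ r < s, 0 <= r, y < lam r & `|leftlim q s - q r| <= e].
  apply: (@filter_ex R (s^'-) _); near=> r.
  split.
  - by near: r; exact: nbhs_left_lt.
  - by near: r; exact: nbhs_left_ge.
  - have r0 : 0 <= r by near: r; exact: nbhs_left_ge.
    by move: r0; near: r; exact: hy2.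
  - by near: r; exact: (hL e e0).
case: hr => rs r0 yr hLr.
have rN : r <= N by apply: le_trans sN; exact: ltW.
rewrite -(@qn_diff R k p u v n (lam s) y (lam r) hy yr (lmono _ _ r0 rs)).
rewrite /jump s0.
have -> : q s - leftlim q s - (qn k p u v n (lam s) - qn k p u v n (lam r)) =
  (q s - qn k p u v n (lam s)) + (qn k p u v n (lam r) - q r) + (q r - leftlim q s) by ring.
apply: le_trans (ler_normD _ _) _; apply: lerD; last by rewrite distrC.
apply: le_trans (ler_normD _ _) _; apply: lerD; last exact: hu.
by rewrite distrC; apply: hu => //; exact: ltW.
Unshelve. all: end_near.
Qed.
End Aux5.
Section Aux6.
Variable R : realType.
Variables (k : nat -> nat) (p : nat -> nat -> R).
Hypothesis hp : partition_seq k p.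

Lemma pinj n i j : (i <= k n)%N -> (j <= k n)%N -> p n i = p n j -> i = j.
Proof.
move=> hi hj hij; case: (ltngtP i j) => // h.
  by have := pmono hp h hj; rewrite hij ltxx.
by have := pmono hp h hi; rewrite hij ltxx.
Qed.

Lemma ple n i j : (i <= j)%N -> (j <= k n)%N -> p n i <= p n j.
Proof.
rewrite leq_eqVlt => /orP[/eqP->|h] hj; first exact: lexx.
exact: ltW (pmono hp h hj).
Qed.

Lemma Dn_at u v n i : (i < k n)%N -> Dn k p u v n (p n i) = term p u v n i.
Proof.
move=> hi; rewrite /Dn big_mkord (bigD1 (Ordinal hi)) //=.
rewrite big1 ?addr0 // => j /andP[/eqP hji hj]; exfalso.
have := pinj (ltnW (ltn_ord j)) (ltnW hi) hji => e.
by move: hj; rewrite -val_eqE /= e eqxx.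
Qed.

Lemma idx_ex (t : R) : 0 < t -> forall n, exists i : nat,
  t <= p n (k n) -> [/\ (i < k n)%N, p n i < t & t <= p n i.+1].
Proof.
case: hp => hp0 _ _ _ _ t0 n.
case: (pselect (t <= p n (k n))) => h; last by exists 0%N.
suff: forall m, (m <= k n)%N -> t <= p n m ->
  exists2 i, (i < m)%N & p n i < t /\ t <= p n i.+1.
  by move=> /(_ (k n) (leqnn _) h) [i hi [h1 h2]]; exists i.
elim=> [|m IH] hm htm.
  by move: (lt_le_trans t0 htm); rewrite hp0 ltxx.
case: (leP t (p n m)) => h'.
  by have [i hi hh] := IH (ltnW hm) h'; exists i => //; exact: ltnW.
by exists m.
Qed.
End Aux6.
Section Aux7.
Variable R : realType.

Lemma norm2 (a b c : R) e1 e2 : `|a - b| <= e1 -> `|b - c| <= e2 -> `|a - c| <= e1 + e2.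
Proof.
move=> h1 h2; have -> : a - c = (a - b) + (b - c) by ring.
by apply: le_trans (ler_normD _ _) _; apply: lerD.
Qed.

Lemma term_bound (p : nat -> nat -> R) (u v : R -> R) n j (P : R -> Prop) cu cv e :
  (forall x, P x -> `|u x - cu| <= e) -> (forall x, P x -> `|v x - cv| <= e) ->
  P (p n j) -> P (p n j.+1) -> `|term p u v n j| <= (e + e) * (e + e).
Proof.
move=> hu hv h1 h2; rewrite /term normrM; apply: ler_pM => //.
  apply: (norm2 (hu _ h2)); rewrite distrC; exact: hu.
apply: (norm2 (hv _ h2)); rewrite distrC; exact: hv.
Qed.

Lemma absP (x y e : R) : `|x - y| <= e -> y - e <= x /\ x <= y + e.
Proof. by rewrite ler_distl => /andP. Qed.

Lemma absI (x y e : R) : y - e <= x -> x <= y + e -> `|x - y| <= e.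
Proof. by move=> h1 h2; rewrite ler_distl h1 h2. Qed.
End Aux7.
Theorem lemma3p3 (R : realType) (k : nat -> nat) (p : nat -> nat -> R)
  (hp : partition_seq k p) (t : R) (ht : 0 < t) :
  exists tn : nat -> R, tn @ \oo --> t /\
    forall u v : R -> R, cadlag u -> cadlag v ->
    forall q : R -> R, cadlag q -> J1cvg (qn k p u v) q ->
      (fun n => jump (qn k p u v n) (tn n)) @ \oo --> jump q t.
Proof.
move: (hp) => [hp0 hinc hpk hinf hmesh].
have [idx hidx] := choice (idx_ex hp ht).
move/cvgryPge: hinf => hinf.
exists (fun n => p n (idx n)); split.
  apply/cvgrPdist_le => eps eps0; near=> n.
  have htk : t <= p n (k n) by near: n; exact: hinf t.
  have [hi1 hi2 hi3] := hidx n htk.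
  have hm : forall i, (i < k n)%N -> p n i <= t -> p n i.+1 - p n i <= eps.
    by near: n; exact: hmesh t eps eps0.
  have := hm _ hi1 (ltW hi2) => h.
  by apply: absI; lra.
move=> u v hu hv q hq [lam [hlam hlamid hunif]].
apply/cvgrPdist_le => eps eps0.
set e := Num.min 1 (eps / 16).
have e0 : 0 < e by rewrite lt_min ltr01 divr_gt0.
have e1 : e <= 1 by rewrite ge_min lexx.
have e16 : e <= eps / 16 by rewrite ge_min lexx orbT.
have [d1 d10 [hu1 hu2]] := cadlag_win hu ht e0.
have [d2 d20 [hv1 hv2]] := cadlag_win hv ht e0.
have [d3 d30 [hq1 hq2]] := cadlag_win hq ht e0.
set d := Num.min (Num.min d1 d2) (Num.min d3 t).
have d0 : 0 < d by rewrite !lt_min d10 d20 d30 ht.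
have dd1 : d <= d1 by rewrite !ge_min lexx.
have dd2 : d <= d2 by rewrite !ge_min lexx !orbT.
have dd3 : d <= d3 by rewrite !ge_min lexx !orbT.
have ddt : d <= t by rewrite !ge_min lexx !orbT.
set η := Num.min e (d / 4).
have η0 : 0 < η by rewrite lt_min e0 divr_gt0.
have ηe : η <= e by rewrite ge_min lexx.
have ηd : η <= d / 4 by rewrite ge_min lexx orbT.
have [N hN] : exists N : nat, t + d < N%:R.
  by exists (Num.bound (t + d)); apply: archi_boundP; lra.
near=> n.
have htk : t <= p n (k n) by near: n; exact: hinf t.
have hm : forall i, (i < k n)%N -> p n i <= t + d -> p n i.+1 - p n i <= η.
  by near: n; exact: hmesh (t + d) η η0.
have hl : forall s, 0 <= s -> `|lam n s - s| <= η.
  by near: n; exact: hlamid η η0.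
have hqn : forall s, 0 <= s -> s <= N%:R -> `|qn k p u v n (lam n s) - q s| <= e.
  by near: n; exact: hunif N e e0.
have [hi1 hi2 hi3] := hidx n htk.
move: hi1 hi2 hi3; set i := idx n => hi1 hi2 hi3.
have hba : p n i.+1 - p n i <= η by apply: hm hi1 _; lra.
have a0 : 0 < p n i.
  case: (posnP i) => [i0|ip].
    by exfalso; move: hba hi3; rewrite i0 hp0 => hba hi3; lra.
  by rewrite -(hp0 n); apply: (pmono hp ip (ltnW hi1)).
rewrite jump_qn // Dn_at //.
have [lt0 lt1] := absP (hl t (ltW ht)).
have [l0 lmono lcont lsurj] := hlam n.
have tN : t <= N%:R by lra.
have hct := @core R k p u v q (lam n) n N%:R e t e0 hq (hlam n) ht tN hqn.
have [hlt|hlt] := eqVneq (lam n t) (p n i).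
  by move: hct; rewrite hlt Dn_at // => h; apply: le_trans h _; lra.
have hD : `|Dn k p u v n (lam n t) - 0| <= 4 * e.
  rewrite subr0.
  case: (Dn_cases hp u v n (lam n t)) => [[j hj [hjt ->]]|->]; last by rewrite normr0; lra.
  have hji : j != i by apply: contra hlt => /eqP hh; rewrite -hjt hh.
  apply: (@le_trans _ _ ((e + e) * (e + e))); last by nra.
  case: (ltngtP j i) hji => // hji' _.
    apply: (@term_bound _ p u v n j (fun x => t - d < x /\ x < t) (leftlim u t) (leftlim v t) e).
    - by move=> x [h1 h2]; apply: hu2 => //; lra.
    - by move=> x [h1 h2]; apply: hv2 => //; lra.
    - have := hinc n j hj; have := ple hp hji' (ltnW hi1); lra.
    - have := hinc n j hj; have := ple hp hji' (ltnW hi1); lra.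
  have hpj := hm j hj (ltac:(lra)).
  apply: (@term_bound _ p u v n j (fun x => t <= x /\ x < t + d) (u t) (v t) e).
  - by move=> x [h1 h2]; apply: hu1 => //; lra.
  - by move=> x [h1 h2]; apply: hv1 => //; lra.
  - have := hinc n j hj; have := ple hp hji' (ltnW hj); lra.
  - have := hinc n j hj; have := ple hp hji' (ltnW hj); lra.
have hjt := norm2 hct hD.
have lc : {within `[0, t + d], continuous lam n}.
  apply: continuous_subspaceW lcont => x /=; rewrite !in_itv /= => /andP[-> _].
  by [].
have [lt2 lt3] := absP (hl (t + d) (ltac:(lra))).
have [α hα hλα] : exists2 α, α \in `[0, t + d] & lam n α = p n i.
  apply: IVT => //; first lra.
  rewrite l0; apply/andP; split; first by rewrite ge_min ltW.
  by rewrite le_max; apply/orP; right; lra.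
move: hα; rewrite in_itv /= => /andP[α0 αtd].
have αt : α != t by apply: contra hlt => /eqP <-; rewrite hλα.
have [la1 la2] := absP (hl α α0).
have αpos : 0 < α.
  rewrite lt_neqAle α0 andbT; apply/eqP => h0; move: hλα; rewrite -h0 l0 => h; lra.
have αN : α <= N%:R by lra.
have hca := @core R k p u v q (lam n) n N%:R e α e0 hq (hlam n) αpos αN hqn.
move: hca; rewrite hλα Dn_at // => hca.
have hja : `|jump q α - 0| <= e + e + e.
  rewrite subr0; case: (ltgtP α t) αt => // hαt _.
    apply: (@jump_le R q α (t - d) (leftlim q t) e e0 hq αpos); first lra.
    by move=> r h1 h2; apply: hq2; lra.
  apply: (@jump_le R q α t (q t) e e0 hq αpos hαt).
  by move=> r h1 h2; apply: hq1; lra.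
have hterm : `|term p u v n i - 0| <= (e + e + e) + (e + e + e).
  by apply: norm2 hja; rewrite distrC.
have h2 : `|0 - term p u v n i| <= (e + e + e) + (e + e + e) by rewrite distrC.
apply: le_trans (norm2 hjt h2) _; lra.
Unshelve. all: end_near.
Qed.
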